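(* Let $k\ge1$ be an integer, $r>0$, $\alpha,\beta>0$, and let $(X,\rho)$ be a finite semimetric space with the counting measure $\mu(A)=|A|$ such that $$T_{k+1}(X)\le \frac{\beta|X|^{k+1}}{(k+1)!}\qquad\text{and}\qquad T_k(X)\ge \frac{\alpha|X|^k}{k!}.$$ Let $X=\bigsqcup_{i=1}^n Z_i$ be any greedy cluster partition of $X$ with associated sets $X_i\subseteq Z_i$, and let $I_1=\{i\in\{1,\dots,n\}: (k+1)|X_i|\le |Z_i|\}$. Then $$\sum_{i\in I_1}|Z_i|\le \frac{(k+1)\beta}{\alpha}|X|.$$
   Context: A finite semimetric space $(X,\rho)$: $\rho$ is a nonnegative symmetric function on $X\times X$ with $\rho(x,x)=0$ satisfying the triangle inequality, where distinct points may be at distance $0$. A $2r$-cluster is a subset of diameter at most $2r$. For $x\in X$ and nonempty $A\subseteq X$, $\rho(x,A)=\min_{a\in A}\rho(x,a)$. For an integer $m\ge1$, $T_m(X)=\frac{1}{m!}\,\#\{(x_1,\dots,x_m)\in X^m:\rho(x_i,x_j)>r \text{ for all } 1\le i<j\le m\}$. Greedy cluster partition: let $X_1$ be a $2r$-cluster of maximal cardinality in $X$ (any one, if several) and $Z_1=\{x\in X:\rho(x,X_1)<r\}$. Given pairwise disjoint $Z_1,\dots,Z_m$ with $R_m=X\setminus\bigcup_{i\le m}Z_i\neq\emptyset$, let $X_{m+1}$ be a $2r$-cluster of maximal cardinality among subsets of $R_m$, and $Z_{m+1}=\{x\in R_m:\rho(x,X_{m+1})<r\}$. The procedure stops when the $Z_i$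 cover $X$, giving $X=\bigsqcup_{i=1}^n Z_i$. *)

(* Defs.v *)
From HB Require Import structures.
From mathcomp Require Import all_boot all_order all_algebra.
Set Implicit Arguments. Unset Strict Implicit. Unset Printing Implicit Defensive.
Import Order.TTheory GRing.Theory Num.Theory.
Local Open Scope ring_scope.

Section Defs.
Variables (R : realFieldType) (X : finType) (rho : X -> X -> R).

Definition semimetric : Prop :=
  [/\ forall x y, 0 <= rho x y,
      forall x y, rho x y = rho y x,
      forall x, rho x x = 0
    & forall x y z, rho x z <= rho x y + rho y z].

Definition cluster2r (r : R) (A : {set X}) : bool :=
  [forall a in A, forall b in A, rho a b <= 2 * r].

Definition Tm (r : R) (m : nat) : R :=
  (#|[set f : {ffun 'I_m -> X} |
       [forall i : 'I_m, forall j : 'I_m, (i < j)%N ==> (r < rho (f i) (f j))]]|)%:R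
  / (m`!)%:R.

Definition rest (Zs : nat -> {set X}) (i : nat) : {set X} :=
  ~: (\bigcup_(j < i) Zs j).

(* One greedy step inside the remaining set Rm: Xi is a 2r-cluster of maximal
   cardinality among subsets of Rm, and Zi = {x in Rm : rho(x, Xi) < r}
   (rho(x,Xi) < r iff some a in Xi has rho x a < r, Xi being nonempty). *)
Definition greedy_step (r : R) (Rm Xi Zi : {set X}) : Prop :=
  [/\ Xi \subset Rm, cluster2r r Xi,
      (forall Y : {set X}, Y \subset Rm -> cluster2r r Y -> #|Y| <= #|Xi|)%N
    & Zi = [set x in Rm | [exists a in Xi, rho x a < r]]].

(* (Xs i, Zs i)_{i < n} is a greedy cluster partition of X (0-indexed). *)
Definition greedy_partition (r : R) (n : nat) (Xs Zs : nat -> {set X}) : Prop :=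
  (forall i, (i < n)%N ->
     rest Zs i != set0 /\ greedy_step r (rest Zs i) (Xs i) (Zs i))
  /\ rest Zs n = set0.

End Defs.

(* Main.v *)
Require Import Defs.
From HB Require Import structures.
From mathcomp Require Import all_boot all_order all_algebra.
From mathcomp Require Import zify ring lra.
Import Order.TTheory GRing.Theory Num.Theory.
Local Open Scope ring_scope.

Lemma card_bigcup_le (T : finType) (I : Type) (s : seq I) (P : pred I) (F : I -> {set T}) :
  (#|\bigcup_(i <- s | P i) F i| <= \sum_(i <- s | P i) #|F i|)%N.
Proof.
elim/big_rec2: _ => [|A n U _ leUn]; first by rewrite cards0.
by rewrite (leq_trans (leq_card_setU _ U).1) ?leq_add2l.
Qed.

Lemma Z_sub_rest {R : realFieldType} {X : finType} {rho : X -> X -> R} {r n Xs Zs i} :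
  greedy_partition rho r n Xs Zs -> (i < n)%N -> Zs i \subset rest Zs i.
Proof.
move=> [H _] /H [_ [_ _ _ ->]].
by apply/subsetP => x; rewrite inE => /andP[].
Qed.

Lemma disj_sum {R : realFieldType} {X : finType} {rho : X -> X -> R} {r n Xs Zs}
  (G : {set X}) (P : pred nat) :
  greedy_partition rho r n Xs Zs ->
  (\sum_(i < n | P i) #|Zs i :&: G| <= #|G|)%N.
Proof.
move=> hg.
suff H : forall m, (m <= n)%N ->
  (\sum_(i < m | P i) #|Zs i :&: G| <= #|(\bigcup_(j < m) Zs j) :&: G|)%N.
  by apply: leq_trans (H n (leqnn n)) _; apply: subset_leq_card; apply: subsetIr.
elim=> [|m IH] hm; first by rewrite big_ord0.
rewrite big_mkcond big_ord_recr /= -big_mkcond big_ord_recr /= setIUl.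
have hsub := Z_sub_rest hg hm.
have hdis : (\bigcup_(j < m) Zs j) :&: G :&: (Zs m :&: G) = set0.
  apply/setP => x; rewrite !inE.
  case hx: (x \in Zs m); last by rewrite !andbF.
  move/subsetP: hsub => /(_ x hx); rewrite /rest inE => /negbTE ->.
  by [].
have := cardsUI (\bigcup_(j < m) Zs j :&: G) (Zs m :&: G).
rewrite hdis cards0 addn0 => ->.
have := IH (ltnW hm).
case: (P m) => /=; lia.
Qed.

Lemma key_piece {R : realFieldType} {X : finType} {rho : X -> X -> R} {r k n Xs Zs}
  (f : {ffun 'I_k -> X}) {i} :
  semimetric rho -> greedy_partition rho r n Xs Zs -> (i < n)%N ->
  (k.+1 * #|Xs i| <= #|Zs i|)%N ->
  (#|Zs i| <= k.+1 * #|Zs i :&: [set y | [forall j : 'I_k, (r < rho (f j) y)%R]]|)%N.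
Proof.
move=> [h0 hsym h00 htri] hg hi hI.
have hsub := Z_sub_rest hg hi.
have [_ [_ _ hmax _]] := (hg.1 i hi).
have hball : forall x, (#|[set y in Zs i | ~~ (r < rho x y)%R]| <= #|Xs i|)%N.
  move=> x.
  apply: leq_trans (hmax [set y in rest Zs i | ~~ (r < rho x y)%R] _ _).
  - apply: subset_leq_card; apply/subsetP => y; rewrite !inE => /andP[hy ->].
    have := subsetP hsub y hy; rewrite /rest !inE => ->; by rewrite ?andbT.
  - by apply/subsetP => y; rewrite inE => /andP[].
  - apply/forallP => a; apply/implyP; rewrite inE => /andP[_ ha].
    apply/forallP => b; apply/implyP; rewrite inE => /andP[_ hb].
    rewrite -leNgt in ha; rewrite -leNgt in hb.
    apply: le_trans (htri a x b) _.
    rewrite hsym; lra.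
set G := [set y | _].
have hdiff : (#|Zs i :\: G| <= k * #|Xs i|)%N.
  apply: leq_trans (_ : (#|\bigcup_(j < k) [set y in Zs i | ~~ (r < rho (f j) y)%R]| <= _)%N).
    apply: subset_leq_card; apply/subsetP => y; rewrite !inE => /andP[hG hy].
    move: hG; rewrite negb_forall => /existsP [j hj]; apply/bigcupP; exists j => //.
    by rewrite inE hy.
  apply: leq_trans (card_bigcup_le _ _ _ _ _) _.
  apply: leq_trans (_ : (\sum_(j < k) #|Xs i| <= _)%N).
    by apply: leq_sum => j _; apply: hball.
  by rewrite sum_nat_const card_ord.
have := cardsID G (Zs i).
move=> hs.
have h1 : (k.+1 * #|Zs i :\: G| <= k * #|Zs i|)%N.
  apply: leq_trans (_ : (k.+1 * (k * #|Xs i|) <= _)%N); first by rewrite leq_mul2l hdiff orbT.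
  by rewrite mulnCA leq_mul2l hI orbT.
nia.
Qed.

Definition Aset {X : finType} {R : realFieldType} (rho : X -> X -> R) r m :=
  [set f : {ffun 'I_m -> X} |
       [forall i : 'I_m, forall j : 'I_m, (i < j)%N ==> (r < rho (f i) (f j))]].

Definition ext {X : finType} {k} (f : {ffun 'I_k -> X}) (y : X) : {ffun 'I_k.+1 -> X} :=
  [ffun i => match unlift ord_max i with Some j => f j | None => y end].

Lemma ext_inj (X : finType) k : injective (fun p : {ffun 'I_k -> X} * X => ext p.1 p.2).
Proof.
move=> [f y] [f' y'] /= /ffunP h.
have := h ord_max; rewrite !ffunE unlift_none => ->.
congr pair; apply/ffunP => j.
by have := h (lift ord_max j); rewrite !ffunE liftK.
Qed.

Lemma count_ext (R : realFieldType) (X : finType) (rho : X -> X -> R) r k :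
  (\sum_(f in Aset rho r k) #|[set y | [forall j : 'I_k, (r < rho (f j) y)%R]]|
     <= #|Aset rho r k.+1|)%N.
Proof.
set P := [set p : {ffun 'I_k -> X} * X | (p.1 \in Aset rho r k) &&
            [forall j : 'I_k, (r < rho (p.1 j) p.2)%R]].
have -> : (\sum_(f in Aset rho r k) #|[set y | [forall j : 'I_k, (r < rho (f j) y)%R]]|
   = #|P|)%N.
  rewrite -sum1_card.
  under eq_bigr => f _ do rewrite -sum1_card.
  rewrite pair_big_dep /=.
  by apply: eq_bigl => p; rewrite !inE.
rewrite -(card_imset _ (@ext_inj X k)).
apply: subset_leq_card; apply/subsetP => g /imsetP [[f y]].
rewrite inE /= => /andP[hf hy] ->.
rewrite inE; apply/forallP => i; apply/forallP => j; apply/implyP => hij.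
rewrite !ffunE.
move: hij; case: unliftP => [i'|] -> ; case: unliftP => [j'|] -> hij.
- move: hij; rewrite !lift_max => hij.
  by move: hf; rewrite inE => /forallP /(_ i') /forallP /(_ j') /implyP; apply.
- by move/forallP: hy; apply.
- by move: hij; rewrite lift_max /= ltnNge (ltnW (ltn_ord j')).
- by rewrite ltnn in hij.
Qed.

Theorem mainTheorem2 (R : realFieldType) (X : finType) (rho : X -> X -> R)
  (k : nat) (r alpha beta : R) (n : nat) (Xs Zs : nat -> {set X}) :
  (1 <= k)%N -> 0 < r -> 0 < alpha -> 0 < beta ->
  semimetric rho ->
  Tm rho r k.+1 <= beta * (#|X|%:R ^+ k.+1) / (k.+1)`!%:R ->
  alpha * (#|X|%:R ^+ k) / (k`!)%:R <= Tm rho r k ->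
  greedy_partition rho r n Xs Zs ->
  (\sum_(i < n | (k.+1 * #|Xs i| <= #|Zs i|)%N) #|Zs i|)%:R
    <= k.+1%:R * beta / alpha * #|X|%:R.
Proof.
move=> hk hr ha hb hsm hT1 hT2 hg.
set S := (\sum_(i < n | _) #|Zs i|)%N.
have hSN : (S <= #|X|)%N.
  apply: leq_trans (_ : (\sum_(i < n | (k.+1 * #|Xs i| <= #|Zs i|)%N)
                          #|Zs i :&: setT| <= _)%N).
    by apply: leq_sum => i _; rewrite setIT.
  by rewrite -cardsT; exact: (disj_sum setT (fun i => (k.+1 * #|Xs i| <= #|Zs i|)%N) hg).
have hf : forall f : {ffun 'I_k -> X},
    (S <= k.+1 * #|[set y | [forall j : 'I_k, (r < rho (f j) y)%R]]|)%N.
  move=> f.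
  apply: leq_trans (_ : (\sum_(i < n | (k.+1 * #|Xs i| <= #|Zs i|)%N)
     k.+1 * #|Zs i :&: [set y | [forall j : 'I_k, (r < rho (f j) y)%R]]| <= _)%N).
    by apply: leq_sum => i hi; apply: (key_piece _ hsm hg (ltn_ord i) hi).
  by rewrite -big_distrr /= leq_mul2l (disj_sum _ (fun i => (k.+1 * #|Xs i| <= #|Zs i|)%N) hg) orbT.
have hcount : (S * #|Aset rho r k| <= k.+1 * #|Aset rho r k.+1|)%N.
  rewrite mulnC -sum_nat_const.
  apply: leq_trans (_ : (\sum_(f in Aset rho r k) k.+1 *
     #|[set y | [forall j : 'I_k, (r < rho (f j) y)%R]]| <= _)%N).
    by apply: leq_sum => f _; apply: hf.
  by rewrite -big_distrr /= leq_mul2l count_ext orbT.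
have hfact : forall m, (m`!)%:R != 0 :> R.
  by move=> m; rewrite pnatr_eq0 -lt0n fact_gt0.
have hA1 : (#|Aset rho r k.+1|)%:R <= beta * (#|X|%:R ^+ k.+1).
  have := ler_wpM2r (ler0n R ((k.+1)`!)) hT1.
  by rewrite /Tm !divfK.
have hA0 : alpha * (#|X|%:R ^+ k) <= (#|Aset rho r k|)%:R.
  have := ler_wpM2r (ler0n R (k`!)) hT2.
  by rewrite /Tm !divfK.
have hcR : (S%:R : R) * (#|Aset rho r k|)%:R <= k.+1%:R * (#|Aset rho r k.+1|)%:R.
  by rewrite -!natrM ler_nat.
case: (posnP #|X|) => hN.
  have -> : S = 0%N by move: hSN; rewrite hN; lia.
  by rewrite hN !mulr0.
set N := (#|X|%:R : R).
have hNp : 0 < N by rewrite ltr0n.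
have hNk : 0 < N ^+ k by rewrite exprn_gt0.
rewrite -(ler_pM2r (mulr_gt0 ha hNk)).
have -> : k.+1%:R * beta / alpha * N * (alpha * N ^+ k)
          = k.+1%:R * (beta * N ^+ k.+1).
  rewrite exprS; field; by rewrite gt_eqF.
apply: le_trans (_ : S%:R * (#|Aset rho r k|)%:R <= _).
  by apply: ler_wpM2l => //; rewrite ler0n.
apply: le_trans hcR _.
by apply: ler_wpM2l => //; rewrite ler0n.
Qed.
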